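(* Suppose every class $c\in[C]$ uses a revision protocol $\rho^c$ that is either imitative via comparison, excess payoff, or pairwise comparison. If a solution of the evolutionary dynamics (E) with initial condition in the relative interior of $X$ (i.e. $\mu^c[s,u](0)>0$ for all $c,s,u$) converges to $\mu^\star$, then $\mu^\star$ is an MSNE.
   Context: Setting. There are $C$ classes of players, $[C]=\{1,\dots,C\}$. For each class $c\in[C]$: $\mathcal S^c$ is a finite state set with $p^c$ elements; for each $s\in\mathcal S^c$, $\mathcal A^c(s)$ is a nonempty finite action set; $\phi^c(\cdot\mid s,a)$ is a probability distribution on $\mathcal S^c$ for each $s\in\mathcal S^c$, $a\in\mathcal A^c(s)$; $\mathcal U^c_D$ is a finite set of $n^c$ deterministic stationary policies, each $u\in\mathcal U^c_D$ assigning to every $s$ a point mass $u(\cdot\mid s)$ on some action of $\mathcal A^c(s)$; $m^c>0$ is the mass of class $c$; $R^c_d>0$ is the state-transition rate. Let $n=\sum_c n^c$. For $u\in\mathcal U^c_D$ put $\phi^{c,u}(s\mid s')=\sum_{a'\in\mathcal A^c(s')}\phi^c(s\mid s',a')u(a'\mid s')$; standing assumption: the Markov chain on $\mathcal S^c$ with kernel $\phi^{c,u}$ has a unique recurrent communicating class, hence a unique stationary distribution $\eta^{c,u}$. The population state is $\mu=(\mu^c)_{c\in[C]}\in X:=\prod_c X^c$, where $X^c=\{\mu^c\in\mathbb R_{\ge0}^{\mathcal S^c\times\mathcal U^c_D}:\sum_{s,u}\mu^c[s,u]=m^c\}$; write $\mu^c[\mathcal S^c,u]:=\sum_{s\in\mathcal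 S^c}\mu^c[s,u]$ and $\mu^c[\mathcal S^c,\cdot]\in\mathbb R^{n^c}_{\ge0}$ for the vector of these. A payoff map $F=(F^c)_{c\in[C]}$ is given, with $F^c$ continuously differentiable on an open neighborhood of $X$ and valued in $\mathbb R^{\mathcal U^c_D}$ ($F^c_u(\mu)$ is the payoff of policy $u$ for class $c$). Each class has a revision protocol $\rho^c=(\rho^c_{uv})_{u,v\in\mathcal U^c_D}$, a Lipschitz continuous map $\mathbb R^{n^c}\times\mathbb R^{n^c}_{\ge0}\to\mathbb R^{n^c\times n^c}_{\ge0}$ whose first argument is a payoff vector and second a policy distribution. The evolutionary dynamics (E) are the ODE on $X$: for all $c\in[C]$, $s\in\mathcal S^c$, $u\in\mathcal U^c_D$, $\dot\mu^c[s,u]=f^{c,d}_{s,u}(\mu)+f^{c,r}_{s,u}(\mu)$, where $f^{c,d}_{s,u}(\mu)=R^c_d\sum_{s'\in\mathcal S^c}\sum_{a'\in\mathcal A^c(s')}\phi^c(s\mid s',a')u(a'\mid s')\mu^c[s',u]-R^c_d\mu^c[s,u]$ and $f^{c,r}_{s,u}(\mu)=\sum_{u'\in\mathcal U^c_D}\mu^c[s,u']\rho^c_{u'u}(F^c(\mu),\mu^c[\mathcal S^c,\cdot])-\mu^c[s,u]\sum_{u'\in\mathcal U^c_D}\rho^c_{uu'}(F^c(\mu),\mu^c[\mathcal S^c,\cdot])$. Solutions from $X$ exist, are unique and remain in $X$. A state $\mu\in X$ is a mixed stationary Nash equilibrium (MSNE) if for every $c\in[C]$: (a) for all $u\in\mathcal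 U^c_D$, $\mu^c[\mathcal S^c,u]>0\Rightarrow F^c_u(\mu)\ge F^c_v(\mu)$ for all $v\in\mathcal U^c_D$; and (b) $f^{c,d}_{s,u}(\mu)=0$ for all $s\in\mathcal S^c,u\in\mathcal U^c_D$. $\mathrm{MSNE}(F,\phi)$ denotes the set of MSNE. Protocol families (for class $c$; $\pi\in\mathbb R^{n^c}$ a payoff vector, $x\in\mathbb R^{n^c}_{\ge0}$ a policy distribution of total mass $m^c$): - imitative: $\rho^c_{uv}(\pi,x)=\frac{x_v}{m^c}r^c_{uv}(\pi,x)$ with $r^c\ge0$ Lipschitz and monotone net conditional imitation rates: for all $u,v,w$, $\pi_v\ge\pi_u\iff r^c_{wv}(\pi,x)-r^c_{vw}(\pi,x)\ge r^c_{wu}(\pi,x)-r^c_{uw}(\pi,x)$; - imitative via comparison: an imitative protocol with $r^c_{uv}(\pi,x)=\varphi^c(\pi_v-\pi_u)$, where $\varphi^c$ is Lipschitz, $\varphi^c(d)=0$ for $d\le0$ and $\varphi^c(d)>0$ for $d>0$; - excess payoff: $\rho^c_{uv}(\pi,x)=\tau^c_v(\hat\pi)$ with $\hat\pi_v=\pi_v-\frac1{m^c}\sum_w x_w\pi_w$, $\tau^c:\mathbb R^{n^c}\to\mathbb R^{n^c}_{\ge0}$ Lipschitz and $\tau^c(\hat\pi)^\top\hat\pi>0$ whenever $\hat\pi$ has a positive component; it is separable if $\tau^c_v(\hat\pi)=\tau^c_v(\hat\pi_v)$ depends only on $\hat\pi_v$, with $\tau^c_v(d)>0\iff d>0$; -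 pairwise comparison: $\rho^c_{uv}(\pi,x)=\rho^c_{uv}(\pi)$ independent of $x$, Lipschitz, with $\rho^c_{uv}(\pi)>0\iff\pi_v>\pi_u$; it is impartial if $\rho^c_{uv}(\pi)=\varphi^c_v(\pi_v-\pi_u)$ for some functions $\varphi^c_v$. *)

(* Defs.v *)
From HB Require Import structures.
From mathcomp Require Import all_boot all_order all_algebra.
From mathcomp Require Import all_classical all_reals all_analysis.
Unset Printing Implicit Defensive.
Import Order.TTheory GRing.Theory Num.Theory.
Import numFieldNormedType.Exports.
Local Open Scope classical_set_scope.
Local Open Scope ring_scope.

Section Vec.
Context {R : realType}.

Definition supn {T : finType} (x : T -> R) : R := \big[Num.max/0]_(i : T) `|x i|.

Definition nonnegv {T : finType} (x : T -> R) : Prop := forall w, 0 <= x w.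

Definition simplexv {T : finType} (mc : R) (x : T -> R) : Prop :=
  nonnegv x /\ \sum_(w : T) x w = mc.

Definition lipschitz2 {T : finType} (g : (T -> R) -> (T -> R) -> T -> T -> R) : Prop :=
  exists L : R, forall pi pi' x x', nonnegv x -> nonnegv x' -> forall u v,
    `|g pi x u v - g pi' x' u v| <= L * (supn (fun w => pi w - pi' w) + supn (fun w => x w - x' w)).

Definition lipschitzV {T : finType} (g : (T -> R) -> T -> R) : Prop :=
  exists L : R, forall p p' v, `|g p v - g p' v| <= L * supn (fun w => p w - p' w).

Definition lipschitzM {T : finType} (g : (T -> R) -> T -> T -> R) : Prop :=
  exists L : R, forall p p' u v, `|g p u v - g p' u v| <= L * supn (fun w => p w - p' w).

Definition lipschitz1 (g : R -> R) : Prop :=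
  exists L : R, forall a b, `|g a - g b| <= L * `|a - b|.

(* rho pi x u v = rho_{uv}(pi, x) *)

Definition revision_protocol {T : finType} (rho : (T -> R) -> (T -> R) -> T -> T -> R) : Prop :=
  lipschitz2 rho /\ (forall pi x, nonnegv x -> forall u v, 0 <= rho pi x u v).

Definition imitative_with {T : finType} (mc : R) (rho r : (T -> R) -> (T -> R) -> T -> T -> R) : Prop :=
  [/\ forall pi x, nonnegv x -> forall u v, 0 <= r pi x u v,
      lipschitz2 r,
      forall pi x, nonnegv x -> forall u v w,
        (pi u <= pi v) <-> (r pi x w u - r pi x u w <= r pi x w v - r pi x v w) &
      forall pi x, simplexv mc x -> forall u v, rho pi x u v = x v / mc * r pi x u v].

Definition imitative {T : finType} (mc : R) (rho : (T -> R) -> (T -> R) -> T -> T -> R) : Prop :=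
  exists r, imitative_with mc rho r.

Definition imitative_comparison {T : finType} (mc : R) (rho : (T -> R) -> (T -> R) -> T -> T -> R) : Prop :=
  exists varphi : R -> R,
    [/\ lipschitz1 varphi,
        forall d, d <= 0 -> varphi d = 0,
        forall d, 0 < d -> 0 < varphi d &
        imitative_with mc rho (fun pi _ u v => varphi (pi v - pi u))].

Definition excess_payoff {T : finType} (mc : R) (rho : (T -> R) -> (T -> R) -> T -> T -> R) : Prop :=
  exists tau : (T -> R) -> T -> R,
    [/\ lipschitzV tau,
        forall p v, 0 <= tau p v,
        forall p, (exists v, 0 < p v) -> 0 < \sum_(v : T) tau p v * p v &
        forall pi x, simplexv mc x -> forall u v,
          rho pi x u v = tau (fun w => pi w - (\sum_(w' : T) x w' * pi w') / mc) v].

Definition pairwise_comparison {T : finType} (rho : (T -> R) -> (T -> R) -> T -> T -> R) : Prop :=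
  exists r : (T -> R) -> T -> T -> R,
    [/\ lipschitzM r,
        forall pi u v, 0 < r pi u v <-> pi u < pi v &
        forall pi x, nonnegv x -> forall u v, rho pi x u v = r pi u v].

End Vec.

Section Model.
Context {R : realType} {C : finType} {S : C -> finType} {U : C -> finType}.

Definition idx : finType := {c : C & (S c * U c)%type}.

(* population states live in R^{sum_c S^c x U^c}, encoded as row vectors *)
Definition pstate := 'rV[R]_#|idx|.

Definition mu_at (x : pstate) (c : C) (s : S c) (u : U c) : R :=
  x ord0 (enum_rank (@Tagged C c (fun c => (S c * U c)%type) (s, u))).

Definition pmass (x : pstate) (c : C) (u : U c) : R := \sum_(s : S c) mu_at x c s u.

Context {A : forall c, S c -> finType}
        (pol : forall c, U c -> forall s : S c, A c s)
        (phi : forall c (s' : S c), A c s' -> S c -> R)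
        (m Rd : C -> R).

Definition upol c (u : U c) (s : S c) (a : A c s) : R := (a == pol c u s)%:R.

Definition phiu c (u : U c) (s s' : S c) : R :=
  \sum_(a : A c s') phi c s' a s * upol c u s' a.

Definition stationary c (u : U c) (eta : S c -> R) : Prop :=
  nonnegv eta /\ \sum_(s : S c) eta s = 1 /\
  forall s, eta s = \sum_(s' : S c) phiu c u s s' * eta s'.

Definition in_X (x : pstate) : Prop :=
  (forall c s u, 0 <= mu_at x c s u) /\
  (forall c, \sum_(s : S c) \sum_(u : U c) mu_at x c s u = m c).

Context (F : forall c, pstate -> U c -> R)
        (rho : forall c, (U c -> R) -> (U c -> R) -> U c -> U c -> R).

Definition f_d (x : pstate) c (s : S c) (u : U c) : R :=
  Rd c * (\sum_(s' : S c) \sum_(a : A c s') phi c s' a s * upol c u s' a * mu_at x c s' u)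
  - Rd c * mu_at x c s u.

Definition f_r (x : pstate) c (s : S c) (u : U c) : R :=
  \sum_(u' : U c) mu_at x c s u' * rho c (F c x) (pmass x c) u' u
  - mu_at x c s u * \sum_(u' : U c) rho c (F c x) (pmass x c) u u'.

Definition vfield (x : pstate) : pstate :=
  \row_(i < #|idx|) (let p := enum_val i in
     f_d x (tag p) (tagged p).1 (tagged p).2 + f_r x (tag p) (tagged p).1 (tagged p).2).

Definition MSNE (x : pstate) : Prop :=
  in_X x /\
  forall c,
    (forall u, 0 < pmass x c u -> forall v, F c x v <= F c x u) /\
    (forall s u, f_d x c s u = 0).

Definition C1_near_X : Prop :=
  exists O : set pstate, open O /\ in_X `<=` O /\
    forall c (u : U c),
      (forall x, O x -> differentiable (fun y => F c y u) x) /\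
      (forall (v x : pstate), O x ->
         {for x, continuous (fun y => 'D_v (fun z => F c z u) y)}).

End Model.
Arguments idx {C} S U.
Arguments pstate R {C} S U.

(* Main.v *)
Require Import Defs.
From HB Require Import structures.
From mathcomp Require Import all_boot all_order all_algebra.
From mathcomp Require Import all_classical all_reals all_analysis.
From mathcomp Require Import ring lra.
Import Order.TTheory GRing.Theory Num.Theory.
Import numFieldNormedType.Exports.
Local Open Scope classical_set_scope.
Local Open Scope ring_scope.

Section Gen.
Context {R : realType}.

Lemma mono (f df : R -> R) (a b : R) : 0 < a -> a <= b ->
  (forall t : R, 0 < t -> is_derive t 1 f (df t)) ->
  (forall t : R, a <= t -> t <= b -> 0 <= df t) -> f a <= f b.
Proof.
move=> a0 ab hd hge.
have dv : forall t : R, 0 < t -> derivable f t 1 by move=> t /hd [].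
apply: (@ger0_derive1_ndecr R f a b) => //.
- move=> x; rewrite in_itv /= => /andP[ax _]; apply: dv; exact: lt_trans ax.
- move=> x; rewrite in_itv /= => /andP[ax xb].
  have x0 : 0 < x by exact: lt_trans ax.
  have := hd x x0 => hx; rewrite derive1E derive_val; apply: hge => //; exact: ltW.
- apply: derivable_within_continuous => x; rewrite in_itv /= => /andP[ax _].
  by apply: dv; exact: lt_le_trans ax.
Qed.

End Gen.


Section Gen2.
Context {R : realType}.

Lemma near_pinfty (P : R -> Prop) : (\forall t \near +oo, P t) ->
  exists M : R, forall t, M < t -> P t.
Proof. by case=> M [_ HM]; exists M. Qed.

Lemma deriv_lim_pos (g dg : R -> R) (l L : R) :
  (forall t : R, 0 < t -> is_derive t 1 g (dg t)) ->
  g t @[t --> +oo] --> l -> dg t @[t --> +oo] --> L -> ~ (0 < L).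
Proof.
move=> hd gl dgL L0.
have L20 : 0 < L / 2 by rewrite divr_gt0.
move/cvgrPdist_lt: dgL => /(_ _ L20) /near_pinfty [M1 HM1].
move/cvgrPdist_lt: gl => /(_ _ ltr01) /near_pinfty [M2 HM2].
set T := Num.max (Num.max M1 M2) 0 + 1.
have T0 : 0 < T by rewrite ltr_pwDr // le_max lexx orbT.
have M1T : M1 < T by rewrite ltr_pwDr // !le_max lexx.
have M2T : M2 < T by rewrite ltr_pwDr // !le_max lexx orbT.
set t := T + (`|g T| + `|l| + 2) / (L / 2).
have Tt : T <= t by rewrite lerDl divr_ge0 // ltW.
have hd' : forall x : R, 0 < x -> is_derive x 1 (g - (L/2) \*: id) (dg x - (L/2) *: 1).
  move=> x x0; apply: is_deriveB; first exact: hd.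
have H0 : (g - (L/2) \*: id) T <= (g - (L/2) \*: id) t.
  apply: (@mono R (g - (L/2) \*: id) (fun x => dg x - (L/2) *: 1) T t T0 Tt hd') => x Tx xt.
  have := HM1 x (lt_le_trans M1T Tx).
  rewrite ltr_distlC => /andP[h1 _].
  rewrite subr_ge0 -[(L/2)%:A]/(L/2 * 1) mulr1; move: h1; lra.
have H : g T - L / 2 * T <= g t - L / 2 * t by move: H0; rewrite /=.
have := HM2 t (lt_le_trans M2T Tt); rewrite ltr_distlC => /andP[_ h2].
have E : `|g T| + `|l| + 2 = L / 2 * (t - T).
  by rewrite /t; field; rewrite gt_eqF.
have := ler_norm l; have := ler_norm (- g T); rewrite normrN.
move: H E h2; lra.
Qed.

End Gen2.


Section Gen3.
Context {R : realType}.

Lemma deriv_lim0 (g dg : R -> R) (l L : R) :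
  (forall t : R, 0 < t -> is_derive t 1 g (dg t)) ->
  g t @[t --> +oo] --> l -> dg t @[t --> +oo] --> L -> L = 0.
Proof.
move=> hd gl dgL.
case: (ltgtP L 0) => // [Ln|Lp]; last by case: (@deriv_lim_pos R g dg l L hd gl dgL Lp).
have hd' : forall t : R, 0 < t -> is_derive t 1 (- g) (- dg t).
  by move=> t t0; apply: is_deriveN; exact: hd.
have := @deriv_lim_pos R (- g) (fun t => - dg t) (- l) (- L) hd'.
have -> : (- g) = (fun t => - g t) by [].
move=> /(_ (cvgN gl) (cvgN dgL)); rewrite oppr_gt0 => /(_ Ln) [].
Qed.

Lemma coord_derive n (mu : R -> 'rV[R]_n) (t : R) (D : 'rV[R]_n) (i : 'I_n) :
  is_derive t 1 mu D -> is_derive t 1 (fun t => mu t ord0 i) (D ord0 i).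
Proof.
move=> [dmu eD].
have hi := (derivable_mxP mu t 1).1 dmu ord0 i.
rewrite -eD (derive_mx dmu) mxE.
exact: derivableP.
Qed.

Lemma coord_cvg n (mu : R -> 'rV[R]_n) (x : 'rV[R]_n) (i : 'I_n) :
  mu t @[t --> +oo] --> x -> mu t ord0 i @[t --> +oo] --> x ord0 i.
Proof.
move=> h; exact: (continuous_cvg _ (@coord_continuous R 1 n ord0 i x) h).
Qed.

Lemma coord_cvg0 n (mu : R -> 'rV[R]_n) (x : 'rV[R]_n) (i : 'I_n) :
  mu t @[t --> 0^'+] --> x -> mu t ord0 i @[t --> 0^'+] --> x ord0 i.
Proof.
move=> h; exact: (continuous_cvg _ (@coord_continuous R 1 n ord0 i x) h).
Qed.

Lemma is_derive_sumT (T : finType) (h : T -> R -> R) (dh : T -> R) (t : R) :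
  (forall i, is_derive t 1 (h i) (dh i)) ->
  is_derive t 1 (fun x => \sum_i h i x) (\sum_i dh i).
Proof.
move=> hd.
have -> : (fun x => \sum_i h i x) = \sum_i h i.
  by apply/funext => x; rewrite fct_sumE.
elim/big_ind2 : _ => //.
- exact: is_derive_cst.
- by move=> f df g dg h1 h2; apply: is_deriveD.
Qed.

Lemma squeeze_cvg (f b : R -> R) (a : R) :
  (\forall t \near +oo, `|a - f t| <= b t) -> b t @[t --> +oo] --> 0 ->
  f t @[t --> +oo] --> a.
Proof.
move=> hb b0; apply/cvgrPdist_le => e e0.
move/cvgrPdist_le: b0 => /(_ e e0) hb2.
apply: filterS2 hb hb2 => t h1.
rewrite sub0r normrN => hbt; apply: le_trans h1 _.
exact: le_trans (ler_norm _) hbt.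
Qed.

Lemma near_pinftyI (P : R -> Prop) (M : R) : (forall t, M < t -> P t) ->
  \forall t \near +oo, P t.
Proof. by move=> h; exists M; split => //; exact: num_real. Qed.

End Gen3.


Section Model1.
Context {R : realType} {C : finType} {S U : C -> finType}
  {A : forall c, S c -> finType}
  (pol : forall c, U c -> forall s : S c, A c s)
  (phi : forall c (s' : S c), A c s' -> S c -> R)
  (m Rd : C -> R)
  (F : forall c, pstate R S U -> U c -> R)
  (rho : forall c, (U c -> R) -> (U c -> R) -> U c -> U c -> R).

Definition ix {c} (s : S c) (u : U c) : 'I_#|idx S U| :=
  enum_rank (@Tagged C c (fun c => (S c * U c)%type) (s, u)).

Lemma vfieldE (y : pstate R S U) (c : C) (s : S c) (u : U c) :
  vfield pol phi Rd F rho y ord0 (ix s u) = f_d pol phi Rd y c s u + f_r F rho y c s u.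
Proof. by rewrite mxE /ix enum_rankK. Qed.

Lemma mu_atE (y : pstate R S U) (c : C) (s : S c) (u : U c) : mu_at y c s u = y ord0 (ix s u).
Proof. by []. Qed.

Lemma sum_upol (c : C) (u : U c) (s : S c) : \sum_(a : A c s) (upol pol c u s a : R) = 1.
Proof.
rewrite (bigD1 (pol c u s)) //= /upol eqxx big1 ?addr0 // => a /negPf ->.
by [].
Qed.

Lemma sum_fd (y : pstate R S U) (c : C) (u : U c) :
  (forall (s' : S c) (a : A c s'), \sum_(s : S c) phi c s' a s = 1) ->
  \sum_(s : S c) f_d pol phi Rd y c s u = 0.
Proof.
move=> hphi; rewrite /f_d sumrB -!mulr_sumr; apply/eqP; rewrite subr_eq0; apply/eqP.
congr (_ * _).
rewrite exchange_big /=; apply: eq_bigr => s' _.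
rewrite exchange_big /=.
under eq_bigr do rewrite -mulr_suml -mulr_suml hphi mul1r.
by rewrite -mulr_suml sum_upol mul1r.
Qed.

Lemma sum_fr (y : pstate R S U) (c : C) (u : U c) :
  \sum_(s : S c) f_r F rho y c s u =
  \sum_(u' : U c) pmass y c u' * rho c (F c y) (pmass y c) u' u
  - pmass y c u * \sum_(u' : U c) rho c (F c y) (pmass y c) u u'.
Proof.
rewrite /f_r sumrB /pmass -mulr_suml; congr (_ - _).
rewrite exchange_big /=; apply: eq_bigr => u' _.
by rewrite mulr_suml.
Qed.

End Model1.


Section Gen5.
Context {R : realType}.

Lemma cvg_sumT (T : finType) (f : T -> R -> R) (a : T -> R) :
  (forall i, f i t @[t --> +oo] --> a i) ->
  (\sum_i f i t) @[t --> +oo] --> \sum_i a i.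
Proof.
move=> h.
have -> : (fun t => \sum_i f i t) = \sum_i f i.
  by apply/funext => x; rewrite fct_sumE.
elim/big_ind2 : _ => //.
- exact: cvg_cst.
- by move=> g1 a1 g2 a2 h1 h2; apply: cvgD.
Qed.

Lemma supn_le_sum (T : finType) (x : T -> R) :
  0 <= supn x <= \sum_i `|x i|.
Proof.
rewrite /supn; elim/big_rec2 : _ => [|i y1 y2 _ /andP[h1 h2]]; first by rewrite lexx.
have := normr_ge0 (x i).
rewrite le_max h1 orbT /= ge_max => hn; apply/andP; split; move: hn h1 h2; lra.
Qed.

Lemma supn_ge0 (T : finType) (x : T -> R) : 0 <= supn x.
Proof. by case/andP: (supn_le_sum _ x). Qed.

Lemma supn_cvg0 (T : finType) (g : T -> R -> R) (a : T -> R) :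
  (forall w, g w t @[t --> +oo] --> a w) ->
  supn (fun w => a w - g w t) @[t --> +oo] --> 0.
Proof.
move=> h.
have hs : (\sum_w `|a w - g w t|) @[t --> +oo] --> \sum_(w : T) (0:R).
  apply: cvg_sumT => w.
  rewrite -(@normr0 _ R) -(subrr (a w)).
  apply: cvg_norm; apply: cvgB => //; exact: cvg_cst.
rewrite big1 // in hs.
apply: squeeze_cvg hs; apply: (@near_pinftyI R _ 0) => t _.
rewrite sub0r normrN ger0_norm ?supn_ge0 //.
by case/andP: (supn_le_sum _ (fun w => a w - g w t)).
Qed.

Lemma lip2_cvg (T : finType) (g : (T -> R) -> (T -> R) -> T -> T -> R)
  (pi : R -> T -> R) (x : R -> T -> R) (pis xs : T -> R) u v :
  lipschitz2 g -> nonnegv xs -> (forall t, 0 <= t -> nonnegv (x t)) ->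
  (forall w, pi t w @[t --> +oo] --> pis w) ->
  (forall w, x t w @[t --> +oo] --> xs w) ->
  g (pi t) (x t) u v @[t --> +oo] --> g pis xs u v.
Proof.
move=> [L hL] hxs hx hpi hxc.
apply: (@squeeze_cvg R (fun t => g (pi t) (x t) u v)
  (fun t => L * (supn (fun w => pis w - pi t w) + supn (fun w => xs w - x t w))) (g pis xs u v)).
  by apply: (@near_pinftyI R _ 0) => t t0; apply: hL => //; apply: hx; exact: ltW.
rewrite -(mulr0 L) -(addr0 0); apply: cvgMl_tmp; apply: cvgD.
  exact: (supn_cvg0 _ (fun w t => pi t w) pis hpi).
exact: (supn_cvg0 _ (fun w t => x t w) xs hxc).
Qed.

End Gen5.


Section Dyn.
Context {R : realType} {C : finType} {S U : C -> finType}
  {A : forall c, S c -> finType}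
  (pol : forall c, U c -> forall s : S c, A c s)
  (phi : forall c (s' : S c), A c s' -> S c -> R)
  (m Rd : C -> R)
  (F : forall c, pstate R S U -> U c -> R)
  (rho : forall c, (U c -> R) -> (U c -> R) -> U c -> U c -> R)
  (mu : R -> pstate R S U) (mustar : pstate R S U).
Context (hphi1 : forall c (s' : S c) (a : A c s'), \sum_(s : S c) phi c s' a s = 1)
  (hC1 : C1_near_X m F)
  (hrev : forall c, revision_protocol (rho c))
  (hX : forall t : R, 0 <= t -> in_X m (mu t))
  (hder : forall t : R, 0 < t -> is_derive t 1 mu (vfield pol phi Rd F rho (mu t)))
  (hlim : mu t @[t --> +oo] --> mustar).

Lemma cvgB' (f g : R -> R) (a b : R) : f t @[t --> +oo] --> a -> g t @[t --> +oo] --> b ->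
  (f t - g t) @[t --> +oo] --> a - b.
Proof. exact: cvgB. Qed.
Lemma cvgD' (f g : R -> R) (a b : R) : f t @[t --> +oo] --> a -> g t @[t --> +oo] --> b ->
  (f t + g t) @[t --> +oo] --> a + b.
Proof. exact: cvgD. Qed.
Lemma cvgM' (f g : R -> R) (a b : R) : f t @[t --> +oo] --> a -> g t @[t --> +oo] --> b ->
  (f t * g t) @[t --> +oo] --> a * b.
Proof. exact: cvgM. Qed.

Lemma mu_cvg c (s : S c) (u : U c) :
  mu_at (mu t) c s u @[t --> +oo] --> mu_at mustar c s u.
Proof. exact: coord_cvg. Qed.

Lemma pmass_cvg c (u : U c) :
  pmass (mu t) c u @[t --> +oo] --> pmass mustar c u.
Proof. apply: cvg_sumT => s; exact: mu_cvg. Qed.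

Lemma inX_star : in_X m mustar.
Proof.
split.
- move=> c s u; apply: (cvgr_to_ge (mu_cvg _ s u)).
  apply: (@near_pinftyI R _ 0) => t t0.
  by case: (hX _ (ltW t0)) => h _; apply: h.
- move=> c.
  have hs : (\sum_(s : S c) \sum_(u : U c) mu_at (mu t) c s u) @[t --> +oo] -->
            \sum_(s : S c) \sum_(u : U c) mu_at mustar c s u.
    apply: cvg_sumT => s; apply: cvg_sumT => u; exact: mu_cvg.
  apply/eqP; rewrite eq_le; apply/andP; split.
  + apply: (cvgr_to_le hs); apply: (@near_pinftyI R _ 0) => t t0.
    by case: (hX _ (ltW t0)) => _ ->.
  + apply: (cvgr_to_ge hs); apply: (@near_pinftyI R _ 0) => t t0.
    by case: (hX _ (ltW t0)) => _ ->.
Qed.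

Lemma F_cvg c (u : U c) : F c (mu t) u @[t --> +oo] --> F c mustar u.
Proof.
case: hC1 => O [_ [XO hO]].
have [hd _] := hO c u.
have hc := differentiable_continuous (hd _ (XO _ inX_star)).
exact: (continuous_cvg _ hc hlim).
Qed.

Lemma rho_cvg c (u v : U c) :
  rho c (F c (mu t)) (pmass (mu t) c) u v @[t --> +oo] -->
  rho c (F c mustar) (pmass mustar c) u v.
Proof.
case: (hrev c) => hL _.
apply: (lip2_cvg _ _ (fun t => F c (mu t)) (fun t => pmass (mu t) c)) => //.
- by move=> w; apply: sumr_ge0 => s _; case: inX_star => h _; apply: h.
- move=> t t0 w; apply: sumr_ge0 => s _; case: (hX _ t0) => h _; apply: h.
- move=> w; exact: F_cvg.
- move=> w; exact: pmass_cvg.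
Qed.

Lemma fd_cvg c (s : S c) (u : U c) :
  f_d pol phi Rd (mu t) c s u @[t --> +oo] --> f_d pol phi Rd mustar c s u.
Proof.
rewrite /f_d; apply: cvgB'; apply: cvgMl_tmp; last exact: mu_cvg.
apply: cvg_sumT => s'; apply: cvg_sumT => a; apply: cvgMl_tmp; exact: mu_cvg.
Qed.

Lemma fr_cvg c (s : S c) (u : U c) :
  f_r F rho (mu t) c s u @[t --> +oo] --> f_r F rho mustar c s u.
Proof.
rewrite /f_r; apply: cvgB'.
  apply: cvg_sumT => u'; apply: cvgM'; [exact: mu_cvg | exact: rho_cvg].
apply: cvgM'; first exact: mu_cvg.
apply: cvg_sumT => u'; exact: rho_cvg.
Qed.

Lemma vfield_star c (s : S c) (u : U c) :
  f_d pol phi Rd mustar c s u + f_r F rho mustar c s u = 0.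
Proof.
apply: (@deriv_lim0 R (fun t => mu t ord0 (ix s u))
  (fun t => vfield pol phi Rd F rho (mu t) ord0 (ix s u)) (mustar ord0 (ix s u))).
- move=> t t0; apply: coord_derive; exact: hder.
- exact: coord_cvg.
- under eq_cvg do rewrite vfieldE.
  apply: cvgD'; [exact: fd_cvg | exact: fr_cvg].
Qed.

End Dyn.


Section Alg.
Context {R : realType} {T : finType}.

Lemma exists_min (P : pred T) (f : T -> R) i0 : P i0 ->
  exists w, P w /\ forall j, P j -> f w <= f j.
Proof.
move=> Pi0; case: (arg_minP f Pi0) => w Pw hw; exists w; split => // j Pj.
Qed.

Lemma exists_max (P : pred T) (f : T -> R) i0 : P i0 ->
  exists w, P w /\ forall j, P j -> f j <= f w.
Proof.
move=> Pi0; case: (arg_maxP f Pi0) => w Pw hw; exists w; split => // j Pj.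
Qed.

Lemma nonneg_npos (a : R) : 0 <= a -> ~~ (0 < a) -> a = 0.
Proof. by move=> h1 h2; apply/eqP; rewrite eq_le h1 andbT leNgt. Qed.

Lemma psum_eq0 (f : T -> R) : (forall i, 0 <= f i) -> \sum_i f i = 0 -> forall i, f i = 0.
Proof.
move=> h0 hs i; apply/eqP.
by move/eqP: hs; rewrite psumr_eq0 // => /allP /(_ i (mem_index_enum i)) /implyP ->.
Qed.

Lemma pw_nash (x pi : T -> R) (r : T -> T -> R) :
  (forall u, 0 <= x u) -> (forall u v, 0 <= r u v) ->
  (forall u v, 0 < r u v <-> pi u < pi v) ->
  (forall u, \sum_u' x u' * r u' u - x u * \sum_u' r u u' = 0) ->
  forall u, 0 < x u -> forall v, pi v <= pi u.
Proof.
move=> hx hr hrp hrest u xu v; rewrite leNgt; apply/negP => hv.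
have [w [xw hw]] := exists_min (fun i => 0 < x i) pi u xu.
have h1 : \sum_u' x u' * r u' w = 0.
  apply: big1 => u' _.
  case: (boolP (0 < x u')) => hx'.
    have : ~~ (0 < r u' w).
      by apply/negP => /hrp; rewrite ltNge (hw _ hx').
    by move/(nonneg_npos _ (hr _ _)) ->; rewrite mulr0.
  by rewrite (nonneg_npos _ (hx _) hx') mul0r.
have := hrest w; rewrite h1 sub0r => /eqP; rewrite oppr_eq0 mulf_eq0 (gt_eqF xw) /= => /eqP hs.
have := psum_eq0 _ (hr w) hs v => hwv.
have : 0 < r w v by apply/hrp; apply: le_lt_trans (hw _ xu) hv.
by rewrite hwv ltxx.
Qed.

Lemma ex_nash (x pi : T -> R) (mc : R) (tau : (T -> R) -> T -> R) :
  0 < mc -> (forall u, 0 <= x u) -> \sum_u x u = mc ->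
  (forall p v, 0 <= tau p v) ->
  (forall p, (exists v, 0 < p v) -> 0 < \sum_v tau p v * p v) ->
  (forall u, \sum_u' x u' * tau (fun w => pi w - (\sum_w' x w' * pi w') / mc) u
     - x u * \sum_u' tau (fun w => pi w - (\sum_w' x w' * pi w') / mc) u' = 0) ->
  (forall v, pi v - (\sum_w' x w' * pi w') / mc <= 0) /\
  (forall u, 0 < x u -> pi u - (\sum_w' x w' * pi w') / mc = 0).
Proof.
move=> mc0 hx hsx htau hac.
set p := fun w => pi w - (\sum_w' x w' * pi w') / mc => hrest.
set K := \sum_u' tau p u'.
have e1 u : mc * tau p u = x u * K.
  by have := hrest u; rewrite -mulr_suml hsx => /eqP; rewrite subr_eq0 => /eqP.
have e2 : \sum_u x u * p u = 0.
  rewrite /p; under eq_bigr do rewrite mulrBr.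
  rewrite sumrB -mulr_suml hsx mulrC divfK ?subrr //; exact: lt0r_neq0.
have hp : forall v, p v <= 0.
  move=> v; rewrite leNgt; apply/negP => pv.
  have := hac p (ex_intro _ v pv) => h.
  have : 0 < mc * \sum_v tau p v * p v by rewrite mulr_gt0.
  rewrite mulr_sumr.
  under eq_bigr do rewrite mulrA e1 mulrAC.
  by rewrite -mulr_suml e2 mul0r ltxx.
split => // u xu.
have hz := psum_eq0 (fun u => - (x u * p u)) (fun u => _) _ u.
have : - (x u * p u) = 0.
  apply: hz => [w|]; first by rewrite oppr_ge0 mulr_ge0_le0.
  by rewrite sumrN e2 oppr0.
move/eqP; rewrite oppr_eq0 mulf_eq0 (gt_eqF xu) /= => /eqP.
by [].
Qed.

Lemma supn_le (x : T -> R) (B : R) : 0 <= B -> (forall i, `|x i| <= B) -> supn x <= B.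
Proof.
move=> B0 h; rewrite /supn; elim/big_rec : _ => // i y _ hy.
by rewrite ge_max h hy.
Qed.

Lemma sum_delta (f : T -> R) (u : T) (d : R) :
  \sum_w f w * (if w == u then d else 0) = f u * d.
Proof.
rewrite (bigD1 u) //= eqxx big1 ?addr0 // => w /negPf ->; exact: mulr0.
Qed.

Lemma tau_vanish (tau : (T -> R) -> T -> R) (p : T -> R) (u1 u2 : T) :
  lipschitzV tau -> (forall p v, 0 <= tau p v) ->
  (forall p, (exists v, 0 < p v) -> 0 < \sum_v tau p v * p v) ->
  (forall v, p v <= 0) -> p u1 = 0 -> u2 != u1 -> tau p u2 = 0.
Proof.
move=> [L hL] htau hac hp p1 u21.
set a := tau p u1; set b := tau p u2.
have b0 : 0 <= b by exact: htau.
case: (ltgtP b 0) => [|bp|] //; first by rewrite ltNge b0.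
exfalso.
have a0 : 0 <= a by exact: htau.
set L' := `|L|.
have L'0 : 0 <= L' by exact: normr_ge0.
set k := (a + 1) / b + 1.
have k1 : 1 <= k by rewrite lerDr divr_ge0 // ?addr_ge0 // ltW.
have kb : k * b = a + 1 + b.
  by rewrite /k mulrDl mul1r divfK // gt_eqF.
set Q := L' * k * (k + 1).
have Q0 : 0 <= Q by rewrite mulr_ge0 ?mulr_ge0 //; lra.
set d := 1 / (Q + 1).
have d0 : 0 < d by rewrite divr_gt0 //; lra.
have Qd : Q * d < 1.
  by rewrite /d mul1r ltr_pdivrMr; lra.
set p' := fun w => p w + (if w == u1 then d else 0) - (if w == u2 then k * d else 0).
have pos : 0 < \sum_v tau p' v * p' v.
  apply: hac; exists u1; rewrite /p' eqxx eq_sym (negPf u21) p1; lra.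
have E : \sum_v tau p' v * p' v =
    \sum_v tau p' v * p v + tau p' u1 * d - tau p' u2 * (k * d).
  rewrite /p'; under eq_bigr do rewrite mulrBr mulrDr.
  by rewrite sumrB big_split /= !sum_delta.
have S1 : \sum_v tau p' v * p v <= 0.
  by apply: sumr_le0 => v _; apply: mulr_ge0_le0.
have sup : supn (fun w => p w - p' w) <= k * d.
  apply: supn_le => [|w]; first by rewrite mulr_ge0 //; lra.
  have u12 : u1 != u2 by rewrite eq_sym.
  rewrite /p'; have [->|n1] := eqVneq w u1.
    rewrite ?eqxx ?(negPf u12) /=.
    have -> : p u1 - (p u1 + d - 0) = - d by ring.
    by rewrite normrN gtr0_norm // ler_peMl // ltW.
  rewrite ?(negPf n1); have [->|n2] := eqVneq w u2.
    rewrite ?eqxx /=.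
    have -> : p u2 - (p u2 + 0 - k * d) = k * d by ring.
    by rewrite ger0_norm // mulr_ge0 //; lra.
  rewrite ?(negPf n2) /=.
  have -> : p w - (p w + 0 - 0) = 0 by ring.
  by rewrite normr0 mulr_ge0 //; lra.
have lip u : `|tau p u - tau p' u| <= L' * (k * d).
  apply: le_trans (hL p p' u) _.
  apply: le_trans (ler_norm _) _; rewrite normrM /L'.
  by apply: ler_wpM2l => //; rewrite ger0_norm ?supn_ge0.
have l1 := lip u1; have l2 := lip u2.
rewrite -/a in l1; rewrite -/b in l2.
move: l1 l2; rewrite !ler_norml => /andP[l1a l1b] /andP[l2a l2b].
have H : 0 < tau p' u1 - k * tau p' u2.
  move: pos; rewrite E => pos.
  have : 0 < d * (tau p' u1 - k * tau p' u2).
    move: pos S1; set X := \sum_v _; move=> pos S1.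
    have -> : d * (tau p' u1 - k * tau p' u2) = tau p' u1 * d - tau p' u2 * (k * d) by ring.
    lra.
  by rewrite pmulr_rgt0.
have H2 : k * tau p' u2 >= k * b - k * (L' * (k * d)).
  rewrite -mulrBr; apply: ler_wpM2l; [lra | lra].
have EQ : Q * d = L' * (k * d) + k * (L' * (k * d)) by rewrite /Q; ring.
lra.
Qed.

End Alg.


Section Alg2.
Context {R : realType} {T : finType}.

Definition Grate (mc : R) (vphi : R -> R) (x pi : T -> R) (v : T) : R :=
  (\sum_u' x u' * (vphi (pi v - pi u') - vphi (pi u' - pi v))) / mc.

Lemma imit_marg (mc : R) (vphi : R -> R) (x pi : T -> R) (v : T) :
  \sum_u' x u' * (x v / mc * vphi (pi v - pi u'))
  - x v * \sum_u' (x u' / mc * vphi (pi u' - pi v)) = x v * Grate mc vphi x pi v.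
Proof.
rewrite /Grate mulr_sumr -sumrB mulrA mulr_sumr mulr_suml; apply: eq_bigr => u' _.
ring.
Qed.

Lemma G_lower (mc B : R) (vphi : R -> R) (x pi : T -> R) (v : T) :
  0 < mc -> (forall u, 0 <= x u) -> \sum_u x u = mc ->
  (forall d, 0 <= vphi d) -> (forall u, vphi (pi u - pi v) <= B) ->
  - B <= Grate mc vphi x pi v.
Proof.
move=> mc0 hx hs hp hB; rewrite /Grate ler_pdivlMr //.
have -> : - B * mc = \sum_u x u * (- B) by rewrite -mulr_suml hs mulrC.
apply: ler_sum => u _; apply: ler_wpM2l => //.
have := hp (pi v - pi u); have := hB u; lra.
Qed.

Lemma G_pos (mc : R) (vphi : R -> R) (x pi : T -> R) (v u : T) :
  0 < mc -> (forall u, 0 <= x u) ->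
  (forall d, d <= 0 -> vphi d = 0) -> (forall d, 0 < d -> 0 < vphi d) ->
  (forall w, pi w <= pi v) -> 0 < x u -> pi u < pi v ->
  0 < Grate mc vphi x pi v.
Proof.
move=> mc0 hx h0 hpos hmax xu puv; rewrite /Grate divr_gt0 //.
have hterm w : 0 <= x w * (vphi (pi v - pi w) - vphi (pi w - pi v)).
  rewrite (h0 (pi w - pi v)); last by have := hmax w; lra.
  rewrite subr0; apply: mulr_ge0 => //.
  case: (lerP (pi v - pi w) 0) => [/h0 -> //|/hpos /ltW //].
rewrite (bigD1 u) //=; apply: ltr_pwDl.
  rewrite (h0 (pi u - pi v)); last lra.
  by rewrite subr0 mulr_gt0 // hpos // subr_gt0.
by apply: sumr_ge0 => w _.
Qed.

Lemma fr_zero_gen (y : T -> R) (r : T -> T -> R) (u : T) :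
  (forall u' u, u' != u -> y u' * r u' u = 0) ->
  \sum_u' y u' * r u' u - y u * \sum_u' r u u' = 0.
Proof.
move=> h.
rewrite (bigD1 u) //= big1; last by move=> u' /h.
rewrite [\sum_u' r u u'](bigD1 u) //= mulrDr.
rewrite mulr_sumr big1; last by move=> u' hu'; apply: h; rewrite eq_sym.
by rewrite !addr0 subrr.
Qed.

End Alg2.


Section Star.
Context {R : realType} {C : finType} {S U : C -> finType}
  {A : forall c, S c -> finType}
  (pol : forall c, U c -> forall s : S c, A c s)
  (phi : forall c (s' : S c), A c s' -> S c -> R)
  (m Rd : C -> R)
  (F : forall c, pstate R S U -> U c -> R)
  (rho : forall c, (U c -> R) -> (U c -> R) -> U c -> U c -> R)
  (mustar : pstate R S U).
Context (hphi1 : forall c (s' : S c) (a : A c s'), \sum_(s : S c) phi c s' a s = 1)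
  (hm : forall c, 0 < m c)
  (hrev : forall c, revision_protocol (rho c))
  (hXs : in_X m mustar)
  (hvs : forall c (s : S c) (u : U c),
     f_d pol phi Rd mustar c s u + f_r F rho mustar c s u = 0).

Local Notation pis c := (F c mustar).
Local Notation xs c := (pmass mustar c).
Local Notation rs c := (rho c (F c mustar) (pmass mustar c)).

Lemma xs_ge0 c u : 0 <= xs c u.
Proof. by apply: sumr_ge0 => s _; case: hXs => h _; apply: h. Qed.

Lemma xs_sum c : \sum_u xs c u = m c.
Proof. by rewrite /pmass exchange_big /=; case: hXs => _ ->. Qed.

Lemma xs_simplex c : simplexv (m c) (xs c).
Proof. by split; [move=> u; exact: xs_ge0 | exact: xs_sum]. Qed.

Lemma mu0_of_pm0 c (s : S c) u : ~~ (0 < xs c u) -> mu_at mustar c s u = 0.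
Proof.
move=> h; have h0 := nonneg_npos _ (xs_ge0 c u) h.
by apply: (psum_eq0 _ _ h0) => s'; case: hXs => hh _; apply: hh.
Qed.

Lemma marg_rest c u :
  \sum_u' xs c u' * rs c u' u - xs c u * \sum_u' rs c u u' = 0.
Proof.
have := sum_fr F rho mustar c u; rewrite -/(pmass mustar c) => <-.
have : \sum_(s : S c) (f_d pol phi Rd mustar c s u + f_r F rho mustar c s u) = 0.
  by rewrite big1 // => s _; exact: hvs.
by rewrite big_split /= sum_fd ?add0r //; exact: hphi1.
Qed.

Lemma msne_of :
  (forall c, (forall u, 0 < xs c u -> forall v, pis c v <= pis c u) /\
    (forall (s : S c) u' u, u' != u -> mu_at mustar c s u' * rs c u' u = 0)) ->
  MSNE pol phi m Rd F mustar.
Proof.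
move=> h; split => // c; have [hn hz] := h c; split => // s u.
have e := hvs c s u.
have : f_r F rho mustar c s u = 0.
  rewrite /f_r; exact: (fr_zero_gen (fun u' => mu_at mustar c s u') (rs c) u (hz s)).
by move: e => /[swap] ->; rewrite addr0.
Qed.

Lemma pairwise_case c : pairwise_comparison (rho c) ->
  (forall u, 0 < xs c u -> forall v, pis c v <= pis c u) /\
  (forall (s : S c) u' u, u' != u -> mu_at mustar c s u' * rs c u' u = 0).
Proof.
move=> [r [_ hrp hre]].
have hx : nonnegv (xs c) by move=> u; exact: xs_ge0.
have er u v : rs c u v = r (pis c) u v by apply: hre.
have r0 u v : 0 <= r (pis c) u v by rewrite -er; case: (hrev c) => _; apply.
have hn : forall u, 0 < xs c u -> forall v, pis c v <= pis c u.
  apply: (pw_nash (xs c) (pis c) (r (pis c)) (xs_ge0 c) r0 (hrp _)) => u.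
  have := marg_rest c u; under eq_bigr do rewrite er.
  by under [\sum_u' rs c u u']eq_bigr do rewrite er.
split => // s u' u _.
case: (boolP (0 < xs c u')) => hxu; last by rewrite mu0_of_pm0 // mul0r.
rewrite er; have : ~~ (0 < r (pis c) u' u).
  by apply/negP => /hrp; rewrite ltNge hn.
by move/(nonneg_npos _ (r0 _ _)) ->; rewrite mulr0.
Qed.

Lemma excess_case c : excess_payoff (m c) (rho c) ->
  (forall u, 0 < xs c u -> forall v, pis c v <= pis c u) /\
  (forall (s : S c) u' u, u' != u -> mu_at mustar c s u' * rs c u' u = 0).
Proof.
move=> [tau [hLt ht0 hac hre]].
set p := fun w => pis c w - (\sum_w' xs c w' * pis c w') / m c.
have er u v : rs c u v = tau p v by apply: hre; exact: xs_simplex.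
have [hp hp0] : (forall v, p v <= 0) /\ (forall u, 0 < xs c u -> p u = 0).
  apply: (ex_nash (xs c) (pis c) (m c) tau (hm c) (xs_ge0 c) (xs_sum c) ht0 hac) => u.
  have := marg_rest c u; under eq_bigr do rewrite er.
  by under [\sum_u' rs c u u']eq_bigr do rewrite er.
split.
  move=> u xu v; have := hp v; have := hp0 u xu; rewrite /p; lra.
move=> s u' u nu.
case: (boolP (0 < xs c u')) => hxu; last by rewrite mu0_of_pm0 // mul0r.
rewrite er (tau_vanish tau p u' u hLt ht0 hac hp (hp0 _ hxu)) ?mulr0 //.
by rewrite eq_sym.
Qed.

End Star.


Section Gen9.
Context {R : realType}.

Lemma is_derive_expRM (B t : R) :
  is_derive t 1 (fun x => expR (B * x)) (expR (B * t) * B).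
Proof.
have dlin : forall x : R, is_derive x 1 (fun x => B * x) B.
  move=> x; have := @is_deriveZ R R R id B x 1 1 (is_derive_id x 1).
  by rewrite /GRing.scale /= mulr1.
split.
  apply/derivable1_diffP.
  apply: (@differentiable_comp _ _ _ _ (fun x => B * x) expR).
    by apply/derivable1_diffP; case: (dlin t).
  by apply/derivable1_diffP; exact: derivable_expR.
rewrite -derive1E.
have -> : (fun x => expR (B * x)) = expR \o (fun x => B * x) by [].
rewrite derive1_comp; [|by case: (dlin t) | exact: derivable_expR].
rewrite !derive1E; have h1 := is_derive_expR (B * t); have h2 := dlin t.
by rewrite (derive_val (f := expR)) (derive_val (f := [eta *%R B])).
Qed.

Lemma lip1_cvg (vphi : R -> R) (g : R -> R) (a : R) :
  lipschitz1 vphi -> g t @[t --> +oo] --> a -> vphi (g t) @[t --> +oo] --> vphi a.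
Proof.
move=> [L hL] ga.
apply: (@squeeze_cvg R (fun t => vphi (g t)) (fun t => L * `|a - g t|) (vphi a)).
  by apply: (@near_pinftyI R _ 0) => t _; apply: hL.
rewrite -(mulr0 L); apply: cvgMl_tmp.
rewrite -(@normr0 _ R) -(subrr a); apply: cvg_norm; apply: cvgB => //; exact: cvg_cst.
Qed.

Lemma imit_bound (T : finType) (mc : R) (rh : (T -> R) -> (T -> R) -> T -> T -> R)
  (vphi : R -> R) : 0 < mc -> lipschitz2 rh ->
  (forall pi x, simplexv mc x -> forall u v, rh pi x u v = x v / mc * vphi (pi v - pi u)) ->
  (forall d, d <= 0 -> vphi d = 0) ->
  exists B, 0 <= B /\ forall (pi : T -> R) u v, vphi (pi v - pi u) <= B.
Proof.
move=> mc0 [L hL] hre h0.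
exists (`|L| * mc); split; first by rewrite mulr_ge0 // ltW.
move=> pi u v.
have [->|nuv] := eqVneq u v; first by rewrite subrr h0 // mulr_ge0 // ltW.
set e := fun (z : T) w => if w == z then mc else 0.
have se z : simplexv mc (e z).
  split; first by move=> w; rewrite /e; case: (w == z) => //; exact: ltW.
  rewrite (bigD1 z) //= /e eqxx big1 ?addr0 // => w /negPf -> //.
have nn z : nonnegv (e z) by case: (se z).
have nvu : v != u by rewrite eq_sym.
have := hL pi pi (e v) (e u) (nn v) (nn u) u v.
rewrite !hre // /e eqxx (negPf nvu) mul0r mul0r subr0 divff ?gt_eqF // mul1r.
move=> h; apply: le_trans (ler_norm _) _; apply: le_trans h _.
apply: le_trans (ler_norm _) _; rewrite normrM; apply: ler_wpM2l => //.
rewrite ger0_norm ?addr_ge0 ?supn_ge0 //.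
have -> : supn (fun w => pi w - pi w) = 0.
  apply/eqP; rewrite eq_le supn_ge0 andbT; apply: supn_le => // w.
  by rewrite subrr normr0.
rewrite add0r; apply: supn_le => [|w]; first exact: ltW.
have [->|nwv] := eqVneq w v.
  by rewrite ?eqxx (negPf nvu) subr0 gtr0_norm.
rewrite ?(negPf nwv) sub0r normrN; case: (w == u); first by rewrite gtr0_norm.
by rewrite normr0 ltW.
Qed.

End Gen9.


Lemma cvg_sum0 {R : realType} (T : finType) (f : T -> R -> R) (a : T -> R) :
  (forall i, f i t @[t --> 0^'+] --> a i) ->
  (\sum_i f i t) @[t --> 0^'+] --> \sum_i a i.
Proof.
move=> h.
have -> : (fun t => \sum_i f i t) = \sum_i f i.
  by apply/funext => x; rewrite fct_sumE.
elim/big_ind2 : _ => //.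
- exact: cvg_cst.
- by move=> g1 a1 g2 a2 h1 h2; apply: cvgD.
Qed.

Section Imit.
Context {R : realType} {C : finType} {S U : C -> finType}
  {A : forall c, S c -> finType}
  (pol : forall c, U c -> forall s : S c, A c s)
  (phi : forall c (s' : S c), A c s' -> S c -> R)
  (m Rd : C -> R)
  (F : forall c, pstate R S U -> U c -> R)
  (rho : forall c, (U c -> R) -> (U c -> R) -> U c -> U c -> R)
  (mu : R -> pstate R S U) (mustar : pstate R S U).
Context (hphi1 : forall c (s' : S c) (a : A c s'), \sum_(s : S c) phi c s' a s = 1)
  (hm : forall c, 0 < m c)
  (hC1 : C1_near_X m F)
  (hrev : forall c, revision_protocol (rho c))
  (hX : forall t : R, 0 <= t -> in_X m (mu t))
  (hint : forall c (s : S c) (u : U c), 0 < mu_at (mu 0) c s u)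
  (hmu0 : mu x @[x --> (0:R)^'+] --> mu 0)
  (hder : forall t : R, 0 < t -> is_derive t 1 mu (vfield pol phi Rd F rho (mu t)))
  (hlim : mu t @[t --> +oo] --> mustar).

Lemma imit_case c : imitative_comparison (m c) (rho c) ->
  (forall u, 0 < pmass mustar c u -> forall v, F c mustar v <= F c mustar u) /\
  (forall (s : S c) u' u, u' != u ->
     mu_at mustar c s u' * rho c (F c mustar) (pmass mustar c) u' u = 0).
Proof.
move=> [vphi [hL1 h0 hpos [hr0 hrL hmono hre]]].
have hXs := inX_star m mu mustar hX hlim.
have hvs := vfield_star pol phi m Rd F rho mu mustar hC1 hrev hX hder hlim.
have vphi0 : forall d, 0 <= vphi d.
  by move=> d; case: (lerP d 0) => [/h0 -> //|/hpos/ltW].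
have er : forall y, in_X m y -> forall u v,
    rho c (F c y) (pmass y c) u v = pmass y c v / m c * vphi (F c y v - F c y u).
  by move=> y hy u v; apply: hre; exact: xs_simplex.
have hn : forall u, 0 < pmass mustar c u -> forall v, F c mustar v <= F c mustar u.
  move=> u xu v0; rewrite leNgt; apply/negP => hv0.
  set pis := F c mustar; set xs := pmass mustar c.
  have [v [_ hmax]] := exists_max xpredT pis u isT.
  have puv : pis u < pis v by apply: lt_le_trans hv0 (hmax v0 isT).
  have Gs : 0 < Grate (m c) vphi xs pis v.
    exact: (G_pos (m c) vphi xs pis v u (hm c) (xs_ge0 m mustar hXs c) h0 hpos
      (fun w => hmax w isT) xu puv).
  have hmr := marg_rest pol phi Rd F rho mustar hphi1 hvs c v.
  move: hmr; rewrite -/xs.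
  under eq_bigr do rewrite (er _ hXs).
  under [\sum_u' rho c _ _ v u']eq_bigr do rewrite (er _ hXs).
  rewrite -/pis -/xs imit_marg => hmr.
  case: (boolP (0 < xs v)) => xv.
    by move/eqP: hmr; rewrite mulf_eq0 !gt_eqF.
  have xv0 : xs v = 0 := nonneg_npos _ (xs_ge0 m mustar hXs c v) xv.
  pose P := fun t => pmass (mu t) c v.
  pose G := fun t => Grate (m c) vphi (pmass (mu t) c) (F c (mu t)) v.
  have dP : forall t : R, 0 < t -> is_derive t 1 P (P t * G t).
    move=> t t0.
    have ert := er _ (hX t (ltW t0)).
    have := is_derive_sumT (S c) (fun s t => mu t ord0 (ix s v))
      (fun s => vfield pol phi Rd F rho (mu t) ord0 (ix s v)) t
      (fun s => coord_derive _ mu t _ (ix s v) (hder t t0)).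
    under eq_bigr do rewrite vfieldE.
    rewrite big_split /= sum_fd // add0r sum_fr.
    under eq_bigr do rewrite ert.
    under [\sum_u' rho c _ _ v u']eq_bigr do rewrite ert.
    by rewrite imit_marg.
  have PT0 : forall t : R, 0 <= t -> 0 <= P t.
    by move=> t t0; exact: (xs_ge0 m (mu t) (hX t t0) c v).
  have Gcvg : G t @[t --> +oo] --> Grate (m c) vphi xs pis v.
    rewrite /G /Grate; apply: cvgMr_tmp.
    apply: cvg_sumT => u'; apply: cvgM'.
      exact: (pmass_cvg mu mustar hlim c u').
    apply: cvgB'; apply: lip1_cvg => //; apply: cvgB';
      exact: (F_cvg m F mu mustar hC1 hX hlim c).
  have [B [B0 hB]] : exists B, 0 <= B /\ forall (pi : U c -> R) u v, vphi (pi v - pi u) <= B.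
    case: (hrev c) => hLip _.
    apply: (imit_bound (U c) (m c) (rho c) vphi (hm c) hLip) => //.
  have Gl : forall t : R, 0 <= t -> - B <= G t.
    move=> t t0; apply: (G_lower (m c) B vphi _ _ v (hm c)) => //.
    - exact: (xs_ge0 m (mu t) (hX t t0) c).
    - exact: (xs_sum m (mu t) (hX t t0) c).
  have [s0 _] : exists s0 : S c, True.
    case: (pickP (fun _ : S c => true)) => [s0 _|hnone]; first by exists s0.
    by move: xu; rewrite /xs /pmass big_pred0 ?ltxx.
  have P0 : 0 < P 0.
    rewrite /P /pmass (bigD1 s0) //=.
    have := hint c s0 v.
    have : 0 <= \sum_(s | s != s0) mu_at (mu 0) c s v.
      by apply: sumr_ge0 => s _; exact: ltW (hint c s v).
    lra.
  have Pc0 : P t @[t --> 0^'+] --> P 0.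
    exact: (cvg_sum0 (S c) (fun s t => mu t ord0 (ix s v)) _
      (fun s => coord_cvg0 _ mu (mu 0) (ix s v) hmu0)).
  move/cvgrPdist_lt: Pc0 => /(_ _ P0) H1.
  have [t1 [t10 ht1]] := filter_ex (filterI (nbhs_right_gt 0) H1).
  have Pt1 : 0 < P t1 by move: ht1; rewrite ltr_distlC => /andP[h _]; lra.
  pose E := fun t => expR (B * t).
  have pos : forall t, t1 <= t -> 0 < P t.
    move=> t t1t.
    have dh : forall x : R, 0 < x -> is_derive x 1 (P * E)
        (P x *: (expR (B * x) * B) + E x *: (P x * G x)).
      by move=> x x0; apply: is_deriveM; [exact: dP | exact: is_derive_expRM].
    have := @mono R (P * E) (fun x => P x *: (expR (B * x) * B) + E x *: (P x * G x))
      t1 t t10 t1t dh.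
    have key : forall x, t1 <= x -> x <= t ->
        0 <= P x *: (expR (B * x) * B) + E x *: (P x * G x).
      move=> x t1x _.
      have x0 : 0 <= x by apply: le_trans t1x; exact: ltW.
      have -> : P x *: (expR (B * x) * B) + E x *: (P x * G x) =
          expR (B * x) * (P x * (B + G x)).
        by rewrite /E /GRing.scale /=; ring.
      apply: mulr_ge0; first exact: expR_ge0.
      apply: mulr_ge0; first exact: PT0.
      by have := Gl x x0; lra.
    move=> /(_ key) /=.
    have Et1 := expR_gt0 (B * t1); have Et := expR_gt0 (B * t).
    rewrite /E => h.
    have : 0 < P t1 * expR (B * t1) by apply: mulr_gt0.
    move=> h2; have h3 := lt_le_trans h2 h.
    rewrite ltNge; apply/negP => hP.
    have : P t * expR (B * t) <= 0 by apply: mulr_le0_ge0 => //; exact: ltW.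
    by rewrite leNgt h3.
  move/cvgrPdist_lt: Gcvg => /(_ _ Gs) /near_pinfty [M HM].
  set T := Num.max (Num.max M t1) 0 + 1.
  have T0 : 0 < T by rewrite ltr_pwDr // le_max lexx orbT.
  have MT : M < T by rewrite ltr_pwDr // !le_max lexx.
  have t1T : t1 <= T by apply: ltW; rewrite ltr_pwDr // !le_max lexx orbT.
  have PT := pos T t1T.
  have incr : forall t, T <= t -> P T <= P t.
    move=> t Tt; apply: (@mono R P (fun x => P x * G x) T t T0 Tt dP).
    move=> x Tx _; apply: mulr_ge0; first by apply: PT0; apply: ltW; exact: lt_le_trans Tx.
    have := HM x (lt_le_trans MT Tx); rewrite ltr_distlC => /andP[h _]; apply: ltW; lra.
  have : P T <= xs v.
    apply: (cvgr_to_ge (pmass_cvg mu mustar hlim c v)).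
    by apply: (@near_pinftyI R _ T) => t Tt; apply: incr; exact: ltW.
  by rewrite xv0 leNgt PT.
split => // s u' u _.
case: (boolP (0 < pmass mustar c u')) => hxu.
  rewrite (er _ hXs) h0 ?mulr0 ?mulr0 //; have := hn _ hxu u; lra.
by rewrite (mu0_of_pm0 m mustar hXs c s u' hxu) mul0r.
Qed.

End Imit.

Theorem corollary1 (R : realType) (C : finType) (S U : C -> finType)
  (A : forall c, S c -> finType)
  (pol : forall c, U c -> forall s : S c, A c s)
  (phi : forall c (s' : S c), A c s' -> S c -> R)
  (m Rd : C -> R)
  (F : forall c, pstate R S U -> U c -> R)
  (rho : forall c, (U c -> R) -> (U c -> R) -> U c -> U c -> R)
  (mu : R -> pstate R S U) (mustar : pstate R S U) :
  (* model data *)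
  (forall c (s : S c), (0 < #|A c s|)%N) ->
  (forall c, injective (pol c)) ->
  (forall c (s' : S c) (a : A c s') (s : S c), 0 <= phi c s' a s) ->
  (forall c (s' : S c) (a : A c s'), \sum_(s : S c) phi c s' a s = 1) ->
  (forall c, 0 < m c) ->
  (forall c, 0 < Rd c) ->
  (* standing assumption: unique stationary distribution of phi^{c,u} *)
  (forall c (u : U c), exists eta, stationary pol phi c u eta /\
     forall eta', stationary pol phi c u eta' -> eta' = eta) ->
  (* payoff map C^1 on an open neighbourhood of X *)
  C1_near_X m F ->
  (* each class uses a revision protocol of one of the three families *)
  (forall c, revision_protocol (rho c)) ->
  (forall c, imitative_comparison (m c) (rho c) \/ excess_payoff (m c) (rho c)
             \/ pairwise_comparison (rho c)) ->
  (* initial condition in the relative interior of X *)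
  in_X m (mu 0) ->
  (forall c (s : S c) (u : U c), 0 < mu_at (mu 0) c s u) ->
  (* mu is a solution of (E) on [0, +oo) staying in X *)
  mu x @[x --> (0:R)^'+] --> mu 0 ->
  (forall t : R, 0 < t -> is_derive t 1 mu (vfield pol phi Rd F rho (mu t))) ->
  (forall t : R, 0 <= t -> in_X m (mu t)) ->
  (* convergence *)
  mu t @[t --> +oo%R] --> mustar ->
  MSNE pol phi m Rd F mustar.
Proof.
move=> hA hpol hphi0 hphi1 hm hRd hstat hC1 hrev hfam hX0 hint hmu0 hder hX hlim.
have hXs := inX_star m mu mustar hX hlim.
have hvs := vfield_star pol phi m Rd F rho mu mustar hC1 hrev hX hder hlim.
apply: (msne_of pol phi m Rd F rho mustar hXs hvs) => c.
case: (hfam c) => [hi|[he|hp]].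
- exact: (imit_case pol phi m Rd F rho mu mustar hphi1 hm hC1 hrev hX hint hmu0 hder hlim c hi).
- exact: (excess_case pol phi m Rd F rho mustar hphi1 hm hXs hvs c he).
- exact: (pairwise_case pol phi m Rd F rho mustar hphi1 hrev hXs hvs c hp).
Qed.
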